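(* Let $G$ be a graph, $n\ge1$, $v_0\in G$, $\mathbf{v}_0=(v_0,\dots,v_0)\in G^n$ and $\mathbf{x}_0=v_0^n\in G^{(n)}$. Let $\eta:G^n\to G^{(n)}$ be the graph map $\eta(v_1,\dots,v_n)=v_1\cdots v_n$. Then the induced homomorphism $\eta_*:A_1(G^n,\mathbf{v}_0)\to A_1(G^{(n)},\mathbf{x}_0)$, $[f]\mapsto[\eta\circ f]$, is surjective.
   Context: All graphs are connected, simple and locally finite. $G^n$ is the Cartesian (box) product graph; $G^{(n)}$ is the $n$th reduced power (vertices: degree-$n$ monomials in vertices of $G$, adjacent iff they differ by moving one token along one edge of $G$). $A_1(K,w_0)$ is the discrete fundamental group: classes of graph maps $f:\mathbb{Z}\to K$ from the integer path graph with $f(i)=w_0$ for $|i|$ large, modulo based homotopy (graph maps $\mathbb{Z}\,\square\,I_m\to K$ with based rows interpolating), with concatenation as product. *)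

(* Defs.v *)
From mathcomp Require Import all_boot all_order all_algebra.
From mathcomp Require Import finmap multiset.
From Stdlib Require Import Relations. From Stdlib Require List.
Set Implicit Arguments. Unset Strict Implicit. Unset Printing Implicit Defensive.
Import GRing.Theory Num.Theory.

Section Graphs.
Variables (V W : Type).

Definition simple_graph (adj : V -> V -> Prop) : Prop :=
  (forall x y, adj x y -> adj y x) /\ (forall x, ~ adj x x).

Definition connected_graph (adj : V -> V -> Prop) : Prop :=
  forall x y, clos_refl_trans V adj x y.

Definition locally_finite (adj : V -> V -> Prop) : Prop :=
  forall v, exists s : seq V, forall w, adj v w -> List.In w s.

Definition graph_map (adjV : V -> V -> Prop) (adjW : W -> W -> Prop)
  (f : V -> W) : Prop :=
  forall x y, adjV x y -> f x = f y \/ adjW (f x) (f y).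

Definition box_adj (adjV : V -> V -> Prop) (adjW : W -> W -> Prop)
  (p q : V * W) : Prop :=
  (adjV p.1 q.1 /\ p.2 = q.2) \/ (p.1 = q.1 /\ adjW p.2 q.2).
End Graphs.

Definition Zadj (i j : int) : Prop := j = (i + 1)%R \/ i = (j + 1)%R.

Definition Iadj (m : nat) (i j : 'I_m.+1) : Prop :=
  (j : nat) = i.+1 \/ (i : nat) = j.+1.

Section A1.
Variables (K : Type) (adjK : K -> K -> Prop) (w0 : K).

Definition based_path (f : int -> K) : Prop :=
  graph_map Zadj adjK f /\
  exists N : nat, forall i : int, (N <= absz i)%N -> f i = w0.

Definition based_homotopic (f g : int -> K) : Prop :=
  exists (m : nat) (H : int * 'I_m.+1 -> K),
    graph_map (box_adj Zadj (@Iadj m)) adjK H /\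
    (forall j : 'I_m.+1, based_path (fun i => H (i, j))) /\
    (forall i, H (i, ord0) = f i) /\
    (forall i, H (i, ord_max) = g i).
End A1.

Local Open Scope mset_scope.
Section Powers.
Variables (V : choiceType) (adj : V -> V -> Prop) (n : nat).

Definition pow_adj (x y : n.-tuple V) : Prop :=
  exists k : 'I_n, adj (tnth x k) (tnth y k) /\
    forall l : 'I_n, l != k -> tnth x l = tnth y l.

(* G^(n) : degree n monomials = multisets of size n *)
Definition redpow_vertex := {A : {mset V} | size A == n}.

Definition redpow_adj (x y : redpow_vertex) : Prop :=
  exists (v w : V) (M : {mset V}),
    adj v w /\ val x = (v +` M)%mset /\ val y = (w +` M)%mset.

Lemma size_seq_mset_tuple (t : n.-tuple V) : size (seq_mset t) == n.
Proof. by rewrite (perm_size (perm_eq_seq_mset t)) size_tuple. Qed.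

Definition eta (t : n.-tuple V) : redpow_vertex :=
  exist _ (seq_mset t) (size_seq_mset_tuple t).

Lemma size_msetn (v : V) : size (msetn n v) == n.
Proof.
have -> : msetn n v = seq_mset (nseq n v).
  by apply/msetP => x; rewrite mset_seqE msetnE count_nseq /= eq_sym; case: (v == x); rewrite ?muln0 ?muln1 ?mul1n ?mul0n.
by rewrite (perm_size (perm_eq_seq_mset _)) size_nseq.
Qed.

Definition redpow_base (v0 : V) : redpow_vertex :=
  exist _ (msetn n v0) (size_msetn v0).

Definition pow_base (v0 : V) : n.-tuple V := [tuple of nseq n v0].
End Powers.

(* Main.v *)
Require Import Defs.
From mathcomp Require Import all_boot all_order all_algebra.
From mathcomp Require Import finmap multiset zify.
From Stdlib Require Import ClassicalEpsilon.
Local Open Scope mset_scope.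

Lemma lift_step (V : choiceType) adj n (t : n.-tuple V) (x y : redpow_vertex V n) :
  seq_mset t = val x -> x = y \/ redpow_adj adj x y ->
  exists t' : n.-tuple V, seq_mset t' = val y /\ (t = t' \/ pow_adj adj t t').
Proof.
move=> hx; case=> [<-|[v [w [M [avw [ex ey]]]]]]; first by exists t; split=>//; left.
have : 0 < count_mem v t by rewrite -mset_seqE hx ex mset1DE eqxx.
rewrite -has_count has_pred1.
case: t hx => s hs /= hx vt.
move: hs hx; case/splitPr: vt => p1 p2 hs hx.
have hs' : size (p1 ++ w :: p2) == n by rewrite !size_cat /= in hs *.
exists (Tuple hs'); split.
  apply/msetP => a; rewrite mset_seqE ey mset1DE /=.
  have := congr1 (fun A : {mset V} => A a) hx.
  rewrite /= mset_seqE ex mset1DE !count_cat /= (eq_sym w) (eq_sym v). lia.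
right.
have kn : size p1 < n by move/eqP: hs <-; rewrite size_cat /= addnS ltnS leq_addr.
exists (Ordinal kn); split.
  by rewrite !(tnth_nth v) /= !nth_cat ltnn subnn.
move=> l hl; rewrite !(tnth_nth v) /= !nth_cat.
case: ltnP => // hle.
have : l - size p1 != 0.
  rewrite subn_eq0 -ltnNge ltn_neqAle hle andbT.
  by apply: contra hl => /eqP e; apply/eqP/val_inj; rewrite /= e.
by case: (l - size p1).
Qed.

Lemma eta_base (V : choiceType) n (v0 : V) : eta (pow_base n v0) = redpow_base n v0.
Proof.
apply/val_inj => /=; apply/msetP => a; rewrite mset_seqE msetnE count_nseq /= eq_sym.
by case: (a == v0); rewrite ?mul0n ?mul1n.
Qed.

Lemma base_unique (V : choiceType) n (v0 : V) (t : n.-tuple V) :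
  seq_mset t = msetn n v0 -> t = pow_base n v0.
Proof.
move=> h; apply/val_inj => /=.
have : all (pred1 v0) t.
  apply/allP => x xt; apply/eqP/eqP; apply: contraLR xt => hx.
  rewrite -has_pred1 has_count -leqNgt leqn0 -mset_seqE h msetnE.
  by rewrite (negbTE hx).
by move/all_pred1P => ->; rewrite size_tuple.
Qed.

Definition stepf (V : choiceType) adj n (t : n.-tuple V) (y : redpow_vertex V n) :=
  epsilon (inhabits t) (fun t' => seq_mset t' = val y /\ (t = t' \/ pow_adj adj t t')).

Lemma stepf_spec (V : choiceType) (adj : V -> V -> Prop) n (t : n.-tuple V) (y : redpow_vertex V n) :
  (exists t' : n.-tuple V, seq_mset t' = val y /\ (t = t' \/ pow_adj adj t t')) ->
  seq_mset (stepf V adj n t y) = val y /\ (t = stepf V adj n t y \/ pow_adj adj t (stepf V adj n t y)).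
Proof. exact: epsilon_spec. Qed.

Theorem lemma4p5 (V : choiceType) (adj : V -> V -> Prop)
  (Hsimple : simple_graph adj) (Hconn : connected_graph adj)
  (Hlf : locally_finite adj) (n : nat) (Hn : (1 <= n)%N) (v0 : V) :
  forall g : int -> redpow_vertex V n,
    based_path (redpow_adj adj (n:=n)) (redpow_base n v0) g ->
    exists f : int -> n.-tuple V,
      based_path (pow_adj adj (n:=n)) (pow_base n v0) f /\
      based_homotopic (redpow_adj adj (n:=n)) (redpow_base n v0)
        (fun i => eta (f i)) g.
Proof.
move=> g [gmap [N gN]].
pose F := fix F (k : nat) : n.-tuple V :=
  if k is k'.+1 then stepf V adj n (F k') (g (k'.+1%:Z - N%:Z)%R) else pow_base n v0.
have FS k : F k.+1 = stepf V adj n (F k) (g (k.+1%:Z - N%:Z)%R) by [].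
have inv k : seq_mset (F k) = val (g (k%:Z - N%:Z)%R) /\
   (F k.+1 = F k \/ pow_adj adj (F k) (F k.+1)).
  elim: k => [|k [IH _]].
  - have e0 : g (0%:Z - N%:Z)%R = redpow_base n v0 by apply: gN; lia.
    rewrite e0 -eta_base /=; split=> //.
    have := @lift_step V adj n (pow_base n v0) (g (0%:Z - N%:Z)%R)
         (g (1%:Z - N%:Z)%R).
    rewrite e0 -eta_base => /(_ erefl) [].
      have := gmap (0%:Z - N%:Z)%R (1%:Z - N%:Z)%R; rewrite e0 -eta_base; apply.
      left; rewrite /=; lia.
    by move=> t' ht'; case: (@stepf_spec _ _ _ _ _ (ex_intro _ t' ht')) => _ [<-|]; auto.
  - have hx : (g (k%:Z - N%:Z)%R = g (k.+1%:Z - N%:Z)%R \/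
       redpow_adj adj (g (k%:Z - N%:Z)%R) (g (k.+1%:Z - N%:Z)%R)).
      by apply: gmap; left; lia.
    have [t' ht'] := @lift_step _ _ _ _ _ _ IH hx.
    have := @stepf_spec _ _ _ _ _ (ex_intro _ t' ht').
    rewrite -FS => [[h1 h2]]; split=> //.
    have hy : (g (k.+1%:Z - N%:Z)%R = g (k.+2%:Z - N%:Z)%R \/
       redpow_adj adj (g (k.+1%:Z - N%:Z)%R) (g (k.+2%:Z - N%:Z)%R)).
      by apply: gmap; left; lia.
    have [t'' ht''] := @lift_step _ _ _ _ _ _ h1 hy.
    have := @stepf_spec _ _ _ _ _ (ex_intro _ t'' ht'').
    rewrite -FS => [[_ [<-|]]]; auto.
pose f (i : int) := match (i + N%:Z)%R with Posz k => F k | Negz _ => pow_base n v0 end.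
have fP (k : nat) : f (k%:Z - N%:Z)%R = F k.
  by rewrite /f; have -> : (k%:Z - N%:Z + N%:Z)%R = Posz k by lia.
have fN i : (i + N%:Z < 0)%R -> f i = pow_base n v0.
  by rewrite /f; case: (i + N%:Z)%R.
have feta i : eta (f i) = g i.
  case: (boolP ((i + N%:Z) < 0)%R) => hi.
    by rewrite fN // eta_base gN //; lia.
  have [k ->] : exists k : nat, i = (Posz k - N%:Z)%R by exists (absz (i + N%:Z)%R); lia.
  rewrite fP; apply/val_inj; rewrite /= (proj1 (inv _)) //.
have fstep i : f i = f (i + 1)%R \/ pow_adj adj (f i) (f (i + 1)%R).
  case: (boolP ((i + N%:Z) < 0)%R) => hi.
    rewrite fN //; case: (boolP ((i + 1 + N%:Z) < 0)%R) => hi'; first by rewrite fN //; left.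
    have -> : (i + 1)%R = (0%:Z - N%:Z)%R by lia.
    by rewrite fP; left.
  have [k ->] : exists k : nat, i = (Posz k - N%:Z)%R by exists (absz (i + N%:Z)%R); lia.
  have -> : (Posz k - N%:Z + 1)%R = (Posz k.+1 - N%:Z)%R by lia.
  rewrite !fP; case: (proj2 (inv k)) => [->|]; auto.
exists f; split.
  split.
    move=> i j [->|->]; first exact: fstep.
    case: (fstep j) => [->|h]; first by left.
    right; move: h => [k [hk hl]]; exists k; split; first by apply: (proj1 Hsimple).
    by move=> l /hl ->.
  exists N => i hi; apply: base_unique.
  by have := congr1 val (feta i); rewrite gN.
exists 0%N, (fun p => g p.1); split.
  move=> p q [[hpq _]|[-> _]]; last by left.
  exact: gmap.
split; first by move=> j; split; [exact: gmap | exists N].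
split=> // i; by rewrite feta.
Qed.
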